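(* Let $G$ be a finite group and $p\ge 5$ a prime. If $\mathrm{pr}^*_G(p,p')>2/5$, then the Sylow $p$-subgroups of $G$ are contained in the soluble radical $R(G)$. In particular, $G$ is $p$-soluble.
   Context: For subsets $X,Y$ of a finite group $G$, $\Pr(X,Y)=|\{(x,y)\in X\times Y: xy=yx\}|/(|X||Y|)$. For sets of primes $\pi_1,\pi_2$, $\mathrm{pr}^*_G(\pi_1,\pi_2)$ denotes the maximum real number $\epsilon$ such that for every pair of distinct primes $r\in\pi_1$, $s\in\pi_2$ there exist a Sylow $r$-subgroup $R$ and a Sylow $s$-subgroup $S$ of $G$ with $\Pr(R,S)\ge\epsilon$ (the Sylow subgroup for a prime not dividing $|G|$ is trivial); $\mathrm{pr}^*_G(p,\pi_2)=\mathrm{pr}^*_G(\{p\},\pi_2)$. $p'$ denotes the set of primes different from $p$. $R(G)$ is the largest soluble normal subgroup of $G$. *)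

(* Defs.v *)
From HB Require Import structures.
From mathcomp Require Import all_boot all_order all_algebra all_fingroup all_solvable.
Set Implicit Arguments. Unset Strict Implicit. Unset Printing Implicit Defensive.
Import Order.TTheory GRing.Theory Num.Theory.

Definition commprob (gT : finGroupType) (X Y : {set gT}) : rat :=
  (#|[set u in setX X Y | (u.1 * u.2 == u.2 * u.1)%g]|%:R / (#|X| * #|Y|)%:R)%R.

(* Primes not dividing |G| (in particular all primes > |G|) have trivial Sylow
   subgroups, giving Pr = 1, so they do not affect the minimum; hence we range
   over primes r, s <= |G|. *)
Definition prstar (gT : finGroupType) (G : {group gT}) (pi1 pi2 : nat_pred) : rat :=
  \big[Order.min/1%R]_(r < #|G|.+1 | prime r && (nat_of_ord r \in pi1))
    \big[Order.min/1%R]_(s < #|G|.+1 | [&& prime s, nat_of_ord s \in pi2 & r != s :> nat])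
      \big[Order.max/0%R]_(R : {group gT} | (R \in 'Syl_(nat_of_ord r)(G))%g)
        \big[Order.max/0%R]_(S : {group gT} | (S \in 'Syl_(nat_of_ord s)(G))%g) commprob R S.

Definition solrad (gT : finGroupType) (G : {group gT}) : {set gT} :=
  (<<\bigcup_(H : {group gT} | (H <| G) && solvable H) H>>)%g.

Definition p_solvable (p : nat) (gT : finGroupType) (G : {group gT}) : Prop :=
  exists s : seq {group gT},
    path (fun H K : {group gT} =>
            ((H <| K) && (p.-group (K / H) || p^'.-group (K / H)))%g) 1%G s
    /\ last 1%G s = G.

(* Main.v *)
Require Import Defs.
From HB Require Import structures.
From mathcomp Require Import all_boot all_order all_algebra all_fingroup all_solvable.
From mathcomp Require Import zify ring lra.
Import Order.TTheory GRing.Theory Num.Theory.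
Set Implicit Arguments. Unset Strict Implicit. Unset Printing Implicit Defensive.

Lemma card_count (gT : finGroupType) (R S : {group gT}) :
  #|[set u in setX R S | (u.1 * u.2 == u.2 * u.1)%g]| =
  (\sum_(y in S) #|('C_R[y])%g|)%N.
Proof.
rewrite -sum1_card.
rewrite (eq_bigl (fun u => (u.1 \in R) && ((u.2 \in S) && (u.1 * u.2 == u.2 * u.1)%g))); last first.
  by move=> u; rewrite !inE andbA.
rewrite -(pair_big_dep (fun x => x \in R) (fun x y => (y \in S) && (x * y == y * x)%g) (fun _ _ => 1%N)) /=.
rewrite (exchange_big_dep (fun y => y \in S)) /=; last by move=> x y _ /andP[].
apply: eq_bigr => y yS.
rewrite -sum1_card; apply: eq_bigl => x.
rewrite yS /=; apply/andP/subcent1P => -[xR c]; split=> //.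
  by apply/esym/eqP.
by apply/eqP; rewrite c.
Qed.

Lemma cent1_bound (gT : finGroupType) (R : {group gT}) (p : nat) (y : gT) :
  prime p -> (5 <= p)%N -> (p.-group R)%g ->
  (5 * #|('C_R[y])%g| <= 4 * #|R| * (y \in ('C(R))%g) + #|R|)%N.
Proof.
move=> pp p5 pR.
have sCR : ('C_R[y] \subset R)%g by apply: subsetIl.
case: (boolP (y \in 'C(R))%g) => yC /=.
  by rewrite -sub_cent1 in yC; rewrite (setIidPl yC); lia.
have hL : (#|('C_R[y])%g| * #|R : 'C_R[y]|%g = #|R|)%N by exact: Lagrange sCR.
have gt1 : (1 < #|R : 'C_R[y]|)%g.
  rewrite indexg_gt1; apply: contra yC => sRC.
  by rewrite -sub_cent1; apply: subset_trans sRC (subsetIr _ _).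
have pn : p.-nat #|R : 'C_R[y]|%g.
  by apply: pnat_dvd pR; apply/dvdn_indexg.
have [k hk] := p_natP pn.
have k1 : (0 < k)%N by case: k hk => // hk0; rewrite hk0 expn0 in gt1.
have hpk : (p ^ 1 <= p ^ k)%N.
  by rewrite leq_pexp2l // prime_gt0.
rewrite expn1 -hk in hpk; rewrite -hL muln0 add0n (mulnC 5) leq_mul2l.
by rewrite (leq_trans p5 hpk) orbT.
Qed.

Lemma sum_mem_card (T : finType) (A B : {set T}) :
  (\sum_(y in A) (y \in B : nat) = #|A :&: B|)%N.
Proof.
rewrite -sum1_card big_mkcond [RHS]big_mkcond /=; apply: eq_bigr => y _.
by rewrite inE; case: (y \in A); case: (y \in B).
Qed.

Lemma commprob_bound (gT : finGroupType) (R S : {group gT}) (p : nat) :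
  prime p -> (5 <= p)%N -> (p.-group R)%g ->
  (2%:R / 5%:R < commprob R S :> rat)%R -> (#|S| < 4 * #|('C_S(R))%g|)%N.
Proof.
move=> pp p5 pR; rewrite /commprob card_count.
set c := (\sum_(y in S) _)%N.
have hsum : (5 * c <= 4 * #|R| * #|('C_S(R))%g| + #|S| * #|R|)%N.
  rewrite /c big_distrr /=.
  apply: (@leq_trans (\sum_(y in S) (4 * #|R| * (y \in ('C(R))%g) + #|R|))%N).
    by apply: leq_sum => y _; exact: (cent1_bound y pp p5 pR).
  rewrite big_split /= sum_nat_const -big_distrr /= sum_mem_card.
  by [].
have d0 : (0 < #|R| * #|S|)%N by rewrite muln_gt0 !cardG_gt0.
rewrite ltr_pdivlMr ?ltr0n // => H.
have H2 : ((2 * (#|R| * #|S|))%:R < (5 * c)%:R :> rat)%R.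
  rewrite !natrM; move: H; set a := ((#|R| * #|S|)%:R : rat); set b := (c%:R : rat).
  move=> H; lra.
rewrite ltr_nat in H2.
have R0 := cardG_gt0 R.
nia.
Qed.

Lemma bigmax_gt_ex (I : finType) (P : pred I) (F : I -> rat) (c : rat) :
  (0 <= c)%R -> (c < \big[Order.max/0%R]_(i | P i) F i)%R -> exists2 i, P i & (c < F i)%R.
Proof.
move=> c0 H.
case: (boolP [exists (i | P i), (c < F i)%R]) => [/exists_inP //| /exists_inPn hn].
have : (\big[Order.max/0%R]_(i | P i) F i <= c)%R.
  by apply/bigmax_leP; split => // i Pi; rewrite leNgt hn.
by rewrite leNgt H.
Qed.

Lemma prstar_ext (gT : finGroupType) (G : {group gT}) (p : nat) :
  (2%:R / 5%:R < prstar G p p^' :> rat)%R -> prime p -> (p <= #|G|)%N ->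
  forall s, prime s -> s != p -> (s <= #|G|)%N ->
  exists R : {group gT}, exists S : {group gT},
    [/\ (R \in 'Syl_p(G))%g, (S \in 'Syl_s(G))%g & (2%:R / 5%:R < commprob R S :> rat)%R].
Proof.
move=> H pp pG s ps sp sG.
have c0 : (0 <= 2%:R / 5%:R :> rat)%R by [].
move: H; rewrite /prstar => /bigmin_gtP [_ H1].
have pG' : (p < #|G|.+1)%N by [].
have pin : p \in (p : nat_pred) by rewrite inE.
move: (H1 (Ordinal pG')); rewrite /= pp /= => /(_ pin) /bigmin_gtP [_ H2].
have sG' : (s < #|G|.+1)%N by [].
have sin : s \in p^' by rewrite !inE.
move: (H2 (Ordinal sG')); rewrite /= ps sin eq_sym sp /= => /(_ isT).
case/bigmax_gt_ex => // R hR /bigmax_gt_ex [] // S hS hc.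
by exists R, S.
Qed.

Lemma idx_part (gT : finGroupType) (G M A S : {group gT}) (s : nat) :
  (M \subset G)%g -> (A \subset M)%g -> (s.-group A)%g -> (s.-Sylow(G) S)%g ->
  (#|S| < 4 * #|A|)%N -> (#|G : M|%g`_s < 4)%N.
Proof.
move=> sMG sAM sA sylS lt4.
have hL : (#|M| * #|G : M|%g = #|G|)%N by exact: Lagrange.
have hS : #|S| = #|G|`_s by exact: card_Hall.
have M0 := cardG_gt0 M.
have i0 : (0 < #|G : M|%g)%N by rewrite indexg_gt0.
have hM : (#|G|`_s = #|M|`_s * #|G : M|%g`_s)%N by rewrite -hL partnM.
have hA : (#|A| %| #|M|`_s)%N.
  by rewrite -(part_pnat_id sA); apply: partn_dvd => //; apply: cardSg.
have := dvdn_leq (part_gt0 _ _) hA.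
rewrite hS hM in lt4.
nia.
Qed.

Lemma div6 (n p : nat) : prime p -> (5 <= p)%N -> n %% p = 1%N ->
  (forall s, prime s -> s != p -> (n`_s < 4)%N) -> n = 1%N \/ (p = 5%N /\ n = 6%N).
Proof.
move=> pp p5 np hs.
have n0 : (0 < n)%N by move: np; case: (n) => //; rewrite mod0n.
have d6 : (n %| 6)%N.
  apply/dvdn_partP => // s; rewrite mem_primes => /and3P [ps _ sn].
  have sp : s != p.
    by apply: contraTneq sn => ->; rewrite /dvdn np.
  have := hs s ps sp; rewrite p_part.
  have : (0 < logn s n)%N by rewrite logn_gt0 mem_primes ps n0 sn.
  have s2 := prime_gt1 ps.
  case: (logn s n) => // [[|k]] _; last first.
    rewrite !expnS; nia.
  rewrite expn1 => s4.
  have : (s == 2) || (s == 3) by lia.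
  by case/orP => /eqP ->.
have n6 : (n <= 6)%N by apply: dvdn_leq.
have p6 : p != 6%N by apply: contraTneq pp => ->.
clear hs; case: n n0 n6 d6 np => [|[|[|[|[|[|[|n]]]]]]] //= _ _ _.
- by left.
- by rewrite modn_small //; lia.
- by rewrite modn_small //; lia.
- case: (ltngtP p 6) => [p6'|p6'|/eqP]; last by rewrite (negbTE p6).
    by move=> _; right; split=> //; lia.
  by rewrite modn_small.
Qed.

Lemma normal_concl (gT : finGroupType) (G P : {group gT}) (p : nat) :
  (p.-Sylow(G) P)%g -> (P <| G)%g ->
  (forall P' : {group gT}, (P' \in 'Syl_p(G))%g -> P' \subset solrad G) /\ p_solvable p G.
Proof.
move=> sylP nPG; split.
  move=> P'; rewrite inE => sylP'.
  have [x xG ->] := Sylow_trans sylP sylP'.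
  rewrite (normP (subsetP (normal_norm nPG) x xG)).
  rewrite /solrad.
  have h : (P \subset \bigcup_(H : {group gT} | (H <| G) && solvable H) H)%g.
    apply/subsetP => z zP; apply/bigcupP; exists P => //.
    by rewrite nPG (pgroup_sol (pHall_pgroup sylP)).
  exact: subset_trans h (sub_gen _).
exists [:: P; G]; split => //=.
rewrite normal1 (quotient_pgroup _ (pHall_pgroup sylP)) nPG /= andbT.
case/and3P: sylP => _ _ hi.
apply/orP; right.
by rewrite /pgroup card_quotient ?normal_norm.
Qed.

Lemma TI_count (gT : finGroupType) (H : {group gT}) (X : {set {group gT}}) :
  (forall Q : {group gT}, Q \in X -> Q \subset H) ->
  {in X &, forall Q Q' : {group gT}, Q != Q' -> (Q :&: Q' = 1)%g} ->
  (\sum_(Q in X) #|(Q :\ 1)%g| <= #|(H :\ 1)%g|)%N.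
Proof.
move=> sXH tiX.
rewrite (eq_bigr (fun Q : {group gT} => \sum_(x in (H :\ 1)%g) (x \in (Q : {set gT})) : nat)); last first.
  move=> Q QX; rewrite sum_mem_card; apply: eq_card => x; rewrite !inE.
  case: (x \in Q) (subsetP (sXH Q QX) x) => /=; last by rewrite !andbF.
  by move=> h; rewrite (h isT) !andbT.
rewrite (exchange_big_dep (fun x => x \in (H :\ 1)%g)) /=; last by [].
rewrite -sum1_card; apply: leq_sum => x xH1.
rewrite (eq_bigl (fun i : {group gT} => i \in X)); last by move=> i; rewrite xH1 andbT.
move: xH1; rewrite !inE => /andP [nx1 xH].
have -> : (\sum_(Q in X) (x \in (Q : {set gT})) = #|X :&: [set Q : {group gT} | x \in (Q : {set gT})]|)%N.
  by rewrite -sum_mem_card; apply: eq_bigr => Q _; rewrite inE.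
apply/card_le1_eqP => Q Q'; rewrite !inE => /andP [QX xQ] /andP [Q'X xQ'].
apply/eqP; apply: contraNT nx1 => nQQ.
by have := tiX Q' Q Q'X QX nQQ; move/setP/(_ x); rewrite !inE xQ xQ' => <-.
Qed.

Lemma divs_check (n : nat) (P : pred nat) : (0 < n)%N -> all P (divisors n) ->
  forall d, (d %| n)%N -> P d.
Proof. by move=> n0 /allP h d; rewrite dvdn_divisors // => /h. Qed.

Lemma d30_5 d : (d %| 30)%N -> d %% 5 = 1%N -> d = 1%N \/ d = 6%N.
Proof.
move=> hd hm; have := @divs_check 30 (fun d => (d %% 5 != 1%N) || (d == 1%N) || (d == 6%N)) isT isT d hd.
by rewrite hm /= => /orP [] /eqP ->; auto.
Qed.

Lemma d30_3 d : (d %| 30)%N -> d %% 3 = 1%N -> d = 1%N \/ d = 10%N.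
Proof.
move=> hd hm; have := @divs_check 30 (fun d => (d %% 3 != 1%N) || (d == 1%N) || (d == 10%N)) isT isT d hd.
by rewrite hm /= => /orP [] /eqP ->; auto.
Qed.

Lemma d15_5 d : (d %| 15)%N -> d %% 5 = 1%N -> d = 1%N.
Proof.
move=> hd hm; have := @divs_check 15 (fun d => (d %% 5 != 1%N) || (d == 1%N)) isT isT d hd.
by rewrite hm /= => /eqP.
Qed.

Lemma normal_of_nSyl1 (gT : finGroupType) (H P : {group gT}) (q : nat) :
  (q.-Sylow(H) P)%g -> #|('Syl_q(H))%g| = 1%N -> (P <| H)%g.
Proof.
move=> sylP n1.
rewrite (card_Syl sylP) in n1.
have /eqP := n1; rewrite indexg_eq1 => sHN.
rewrite /normal (pHall_sub sylP) /=.
exact: subset_trans sHN (subsetIr _ _).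
Qed.

Lemma prime_grp_sub (gT : finGroupType) (Q Q' : {group gT}) :
  prime #|Q| -> prime #|Q'| -> (Q \subset Q')%g -> Q = Q'.
Proof.
move=> pQ pQ' sQ.
have := cardSg sQ; rewrite dvdn_prime2 // => /eqP eqc.
by apply/val_inj/eqP; rewrite eqEcard sQ eqc leqnn.
Qed.

Lemma normal5 (gT : finGroupType) (H P : {group gT}) :
  (#|H| %| 30)%N -> (5.-Sylow(H) P)%g -> (P <| H)%g.
Proof.
move=> dH sylP.
have sPH := pHall_sub sylP.
have p5 : prime 5 by [].
have p3 : prime 3 by [].
have n5d : (#|('Syl_5(H))%g| %| 30)%N := dvdn_trans (card_Syl_dvd 5 H) dH.
case: (d30_5 n5d (card_Syl_mod H p5)) => [n1|n6]; first exact: normal_of_nSyl1 sylP n1.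
have hi : #|H : 'N_H(P)|%g = 6%N by rewrite -(card_Syl sylP).
have sNH : ('N_H(P) \subset H)%g := subsetIl _ _.
have sPN : (P \subset 'N_H(P))%g by rewrite subsetI sPH normG.
have hL : (#|('N_H(P))%g| * 6 = #|H|)%N by rewrite -hi; exact: Lagrange.
have [P1|ntP] := eqVneq (P : {set gT}) 1%g.
  by rewrite P1 normal1.
have P1 : (1 < #|P|)%N by rewrite cardG_gt1.
have := cardSg sPN => dPN.
have N5 : #|('N_H(P))%g| = 5%N.
  have : (#|('N_H(P))%g| %| 5)%N.
    by move: dH; rewrite -hL (_ : 30 = 5 * 6)%N // dvdn_pmul2r.
  move/(@divs_check 5 (fun d => (d == 1%N) || (d == 5%N)) isT isT) => /orP [] /eqP // N1.
  by move: dPN; rewrite N1 => /dvdn_leq => /(_ isT); rewrite leqNgt P1.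
have P5 : #|P| = 5%N.
  move: dPN; rewrite N5.
  move/(@divs_check 5 (fun d => (d == 1%N) || (d == 5%N)) isT isT) => /orP [] /eqP // P1'.
  by move: P1; rewrite P1'.
have H30 : #|H| = 30%N by rewrite -hL N5.
have [V sylV] := Sylow_exists 3 H.
have V3 : #|V| = 3%N by rewrite (card_Hall sylV) H30 p_part.
have sVH := pHall_sub sylV.
have n3d : (#|('Syl_3(H))%g| %| 30)%N := dvdn_trans (card_Syl_dvd 3 H) dH.
case: (d30_3 n3d (card_Syl_mod H p3)) => [n1|n10].
  have nVH := normal_of_nSyl1 sylV n1.
  have nVP : (P \subset 'N(V))%g := subset_trans sPH (normal_norm nVH).
  have VP15 : #|(V <*> P)%g| = 15%N.
    rewrite (norm_joinEr nVP) TI_cardMg ?V3 ?P5 //.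
    by apply: coprime_TIg; rewrite V3 P5.
  have sylP' : (5.-Sylow(V <*> P) P)%g.
    by rewrite pHallE joing_subr VP15 P5 p_part.
  have d15 : (#|('Syl_5(V <*> P))%g| %| 15)%N by rewrite -VP15 card_Syl_dvd.
  have nP' := normal_of_nSyl1 sylP' (d15_5 d15 (card_Syl_mod _ p5)).
  have sVPN : ((V <*> P) \subset 'N_H(P))%g.
    by rewrite subsetI join_subG sVH sPH (normal_norm nP').
  by have := subset_leq_card sVPN; rewrite VP15 N5.
exfalso.
have c5 : forall Q : {group gT}, Q \in ('Syl_5(H))%g -> #|Q| = 5%N.
  by move=> Q; rewrite inE => sQ; rewrite (card_Hall sQ) H30 p_part.
have c3 : forall Q : {group gT}, Q \in ('Syl_3(H))%g -> #|Q| = 3%N.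
  by move=> Q; rewrite inE => sQ; rewrite (card_Hall sQ) H30 p_part.
have cD : forall Q : {group gT}, #|(Q :\ 1)%g| = #|Q|.-1.
  by move=> Q; rewrite [in RHS](cardsD1 1%g) group1.
set X := ('Syl_5(H) :|: 'Syl_3(H))%g.
have pX : forall Q : {group gT}, Q \in X -> prime #|Q|.
  by move=> Q; rewrite inE => /orP [/c5|/c3] ->.
have sX : forall Q : {group gT}, Q \in X -> (Q \subset H)%g.
  by move=> Q; rewrite !inE => /orP [] /pHall_sub.
have tiX : {in X &, forall Q Q' : {group gT}, Q != Q' -> (Q :&: Q' = 1)%g}.
  move=> Q Q' QX Q'X nQQ; apply: prime_TIg; first exact: pX.
  by apply: contra nQQ => sQ; apply/eqP; apply: prime_grp_sub sQ; apply: pX.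
have := TI_count sX tiX.
rewrite (bigID (fun Q : {group gT} => Q \in ('Syl_5(H))%g)) /=.
have e1 : (\sum_(Q in X | Q \in ('Syl_5(H))%g) #|(Q :\ 1)%g| = 24)%N.
  rewrite (eq_bigl (fun Q : {group gT} => Q \in ('Syl_5(H))%g)); last first.
    by move=> Q; rewrite /X in_setU; case: (Q \in ('Syl_5(H))%g); rewrite /= ?andbF.
  rewrite (eq_bigr (fun _ => 4%N)); last by move=> Q /c5; rewrite cD => ->.
  by rewrite sum_nat_const n6.
have e2 : (\sum_(Q in X | Q \notin ('Syl_5(H))%g) #|(Q :\ 1)%g| = 20)%N.
  rewrite (eq_bigl (fun Q : {group gT} => Q \in ('Syl_3(H))%g)); last first.
    move=> Q; apply/idP/idP.
      by move=> /andP []; rewrite /X in_setU => /orP [->|//].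
    move=> h3; rewrite /X in_setU h3 orbT /=.
    by apply/negP => h5; have := c5 _ h5; rewrite (c3 _ h3).
  rewrite (eq_bigr (fun _ => 2%N)); last by move=> Q /c3; rewrite cD => ->.
  by rewrite sum_nat_const n10.
rewrite e1 e2.
move=> hle; have := cardsD1 1%g H; rewrite group1 H30 add1n => -[e]; by rewrite -e in hle.
Qed.

Lemma acts_Syl (gT : finGroupType) (G A : {group gT}) (p : nat) :
  (A \subset G)%g -> [acts A, on 'Syl_p(G) | 'JG]%g.
Proof.
move=> sAG; apply/actsP => a aA Q; rewrite !inE /=.
by rewrite pHallJ // (subsetP sAG).
Qed.

Lemma syl_norm_eq (gT : finGroupType) (G R Q : {group gT}) (p : nat) :
  (p.-Sylow(G) R)%g -> (p.-Sylow(G) Q)%g -> (R \subset 'N(Q))%g -> R = Q.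
Proof.
move=> sylR sylQ nQR.
have sylQN : (p.-Sylow('N_G(Q)) Q)%g by rewrite Sylow_subnorm.
have nQN : (Q <| 'N_G(Q))%g by rewrite /normal subsetI (pHall_sub sylQ) normG subsetIr.
have sRN : (R \subset 'N_G(Q))%g by rewrite subsetI (pHall_sub sylR) nQR.
have sRQ : (R \subset Q)%g by rewrite (sub_normal_Hall sylQN nQN sRN) (pHall_pgroup sylR).
apply/val_inj/eqP; rewrite eqEcard sRQ /=.
by rewrite (card_Hall sylR) (card_Hall sylQ).
Qed.

Lemma fix_all (gT : finGroupType) (G R A : {group gT}) (s : nat) :
  prime s -> s != 5%N -> (s.-group A)%g -> (A \subset G)%g -> (A \subset 'C(R))%g ->
  (R \in 'Syl_5(G))%g -> #|('Syl_5(G))%g| = 6%N ->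
  forall Q : {group gT}, (Q \in 'Syl_5(G))%g -> (A \subset 'N(Q))%g.
Proof.
move=> ps s5 sA sAG sAC RX X6.
set X := ('Syl_5(G))%g.
have sylR : (5.-Sylow(G) R)%g by move: RX; rewrite inE.
have sRG := pHall_sub sylR.
set Y := X :\ R.
have actY : forall B : {group gT}, (B \subset G)%g -> (B \subset 'N(R))%g ->
    [acts B, on Y | 'JG]%g.
  move=> B sBG nRB; apply/actsP => b bB Q.
  have Rb : ('JG%act R b) = R.
    by apply/val_inj => /=; apply/normP; apply: (subsetP nRB).
  rewrite !inE -{1}Rb (inj_eq (act_inj 'JG b)).
  congr (_ && _).
  by rewrite /= pHallJ // (subsetP sBG).
have Y5 : #|Y| = 5%N.
  by move: X6; rewrite (cardsD1 R) RX => -[].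
have nRA : (A \subset 'N(R))%g by apply: subset_trans sAC (cent_sub R).
have actYA := actY A sAG nRA.
have m1 := pgroup_fix_mod sA actYA.
set F := ('Fix_(Y | 'JG)(A))%g in m1.
have F0 : (0 < #|F|)%N.
  rewrite lt0n; apply/negP => /eqP F0; move: m1; rewrite F0 Y5 mod0n => /eqP.
  rewrite -/(dvdn s 5) dvdn_prime2 // => /eqP es.
  by rewrite es eqxx in s5.
have cAR : (R \subset 'C(A))%g by rewrite centsC.
have actFR : [acts R, on F | 'JG]%g.
  apply: actsI; first exact: actY (normG R).
  have h : [acts 'N_[set: gT](A), on 'Fix_'JG([set: gT] :&: A) | 'JG]%g := acts_subnorm_fix 'JG A.
  rewrite !setTI in h.
  have sRN : (R \subset 'N(A))%g by exact: subset_trans cAR (cent_sub A).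
  exact: subset_trans sRN h.
have m2 := pgroup_fix_mod (pHall_pgroup sylR) actFR.
have FR0 : ('Fix_(F | 'JG)(R))%g = set0.
  apply/setP => Q; rewrite inE in_set0.
  apply/negP => /andP [QF]; rewrite afixJG => nQR.
  move: QF; rewrite /F /Y !inE => /andP [/andP [QR QX] _].
  have eRQ := syl_norm_eq sylR QX nQR.
  by rewrite eRQ eqxx in QR.
rewrite FR0 cards0 mod0n in m2.
have sFY : (F \subset Y) by apply: subsetIl.
have FY : F = Y.
  apply/eqP; rewrite eqEcard sFY Y5.
  have := subset_leq_card sFY; rewrite Y5.
  move: F0 m2; move: #|F| => f; case: f => [|[|[|[|[|[|f]]]]]] //.
move=> Q QX.
case: (eqVneq Q R) => [->|QR]; first exact: nRA.
have : Q \in F by rewrite FY /Y in_setD1 QR QX.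
by rewrite inE afixJG => /andP [].
Qed.

Lemma actY_lem (gT : finGroupType) (G R B : {group gT}) (p : nat) :
  (B \subset G)%g -> (B \subset 'N(R))%g -> [acts B, on ('Syl_p(G) :\ R)%g | 'JG]%g.
Proof.
move=> sBG nRB; apply/actsP => b bB Q.
have Rb : ('JG%act R b) = R.
  by apply/val_inj => /=; apply/normP; apply: (subsetP nRB).
rewrite !inE -{1}Rb (inj_eq (act_inj 'JG b)).
congr (_ && _).
by rewrite /= pHallJ // (subsetP sBG).
Qed.

Lemma sub_index5 (gT : finGroupType) (G R : {group gT}) :
  (R \in 'Syl_5(G))%g -> #|('Syl_5(G))%g| = 6%N ->
  exists R0 : {group gT}, [/\ (R0 \subset R)%g, (#|R| <= 5 * #|R0|)%N &
    forall Q : {group gT}, (Q \in 'Syl_5(G))%g -> (R0 \subset 'N(Q))%g].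
Proof.
move=> RX X6.
set X := ('Syl_5(G))%g.
have sylR : (5.-Sylow(G) R)%g by move: RX; rewrite inE.
have sRG := pHall_sub sylR.
set Y := X :\ R.
have Y5 : #|Y| = 5%N by move: X6; rewrite (cardsD1 R) RX => -[].
have [Q QY] : exists Q, Q \in Y.
  by apply/set0Pn; rewrite -card_gt0 Y5.
have actRY : [acts R, on Y | 'JG]%g := actY_lem 5 sRG (normG R).
set O := orbit 'JG%act R Q.
have sOY : O \subset Y by rewrite acts_sub_orbit.
have cO : #|O| = #|R : 'N_R(Q)|%g by rewrite card_orbit astab1JG.
have dO : (#|O| %| #|R|)%N by apply: dvdn_orbit.
have pO : 5.-nat #|O| := pnat_dvd dO (pHall_pgroup sylR).
have O5 : #|O| = 5%N.
  have := subset_leq_card sOY; rewrite Y5.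
  have : #|O| != 1%N.
    rewrite cO indexg_eq1; apply/negP => sRN.
    have nQR : (R \subset 'N(Q))%g := subset_trans sRN (subsetIr _ _).
    move: QY; rewrite /Y in_setD1 => /andP [QR QX].
    have sylQ : (5.-Sylow(G) Q)%g by move: QX; rewrite inE.
    by rewrite (syl_norm_eq sylR sylQ nQR) eqxx in QR.
  move: pO; case: #|O| => [|[|[|[|[|[|o]]]]]] //.
have OY : O = Y by apply/eqP; rewrite eqEcard sOY Y5 O5.
set R0 := ('N_R(Q))%G.
have sR0R : (R0 \subset R)%g := subsetIl _ _.
have i5 : #|R : R0|%g = 5%N by rewrite -cO.
have nR0R : (R0 <| R)%g.
  apply: (p_maximal_normal (pHall_pgroup sylR)).
  by apply: p_index_maximal => //; rewrite i5.
exists R0; split => //.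
  by rewrite -(Lagrange sR0R) i5 mulnC.
move=> Q' Q'X.
case: (eqVneq Q' R) => [->|Q'R]; first exact: subset_trans sR0R (normG R).
have : Q' \in O by rewrite OY /Y in_setD1 Q'R Q'X.
case/orbitP => r rR <-.
have nR0Q : (R0 \subset 'N(Q))%g := subsetIr _ _.
rewrite /= normJ -(normP (subsetP (normal_norm nR0R) r rR)) conjSg.
exact: nR0Q.
Qed.

Lemma idx_part_le (gT : finGroupType) (G M A S : {group gT}) (s c : nat) :
  (M \subset G)%g -> (A \subset M)%g -> (s.-group A)%g -> (s.-Sylow(G) S)%g ->
  (#|S| <= c * #|A|)%N -> (#|G : M|%g`_s <= c)%N.
Proof.
move=> sMG sAM sA sylS lec.
have hL : (#|M| * #|G : M|%g = #|G|)%N by exact: Lagrange.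
have hS : #|S| = #|G|`_s by exact: card_Hall.
have M0 := cardG_gt0 M.
have i0 : (0 < #|G : M|%g)%N by rewrite indexg_gt0.
have hM : (#|G|`_s = #|M|`_s * #|G : M|%g`_s)%N by rewrite -hL partnM.
have hA : (#|A| %| #|M|`_s)%N.
  by rewrite -(part_pnat_id sA); apply: partn_dvd => //; apply: cardSg.
have := dvdn_leq (part_gt0 _ _) hA.
have A0 := cardG_gt0 A.
rewrite hS hM in lec.
nia.
Qed.

Lemma div30 (n : nat) : (0 < n)%N ->
  (forall s, prime s -> s != 5%N -> (s %| n)%N -> (n`_s < 4)%N) -> (n`_5 <= 5)%N -> (n %| 30)%N.
Proof.
move=> n0 hs h5.
apply/dvdn_partP => // s; rewrite mem_primes => /and3P [ps _ sn].
rewrite p_part.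
have : (0 < logn s n)%N by rewrite logn_gt0 mem_primes ps n0 sn.
have s2 := prime_gt1 ps.
case: (eqVneq s 5%N) => [e5|s5].
  move: h5; rewrite p_part e5.
  case: (logn 5 n) => [|[|k]] h hl.
  - by rewrite ltnn in hl.
  - by [].
  - by move: h; rewrite !expnS; nia.
have := hs s ps s5 sn; rewrite p_part.
case: (logn s n) => [|[|k]] h4 hl.
- by rewrite ltnn in hl.
- rewrite expn1 in h4 *.
  have : (s == 2) || (s == 3) by lia.
  by case/orP => /eqP ->.
- by move: h4; rewrite !expnS; nia.
Qed.

Lemma no56 (gT : finGroupType) (G : {group gT}) :
  #|('Syl_5(G))%g| = 6%N ->
  (forall s, prime s -> s != 5%N -> (s <= #|G|)%N ->
     exists R : {group gT}, exists S : {group gT},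
       [/\ (R \in 'Syl_5(G))%g, (S \in 'Syl_s(G))%g & (#|S| < 4 * #|('C_S(R))%g|)%N]) ->
  False.
Proof.
move=> X6 hyp.
set X := ('Syl_5(G))%g.
set K := ('C_G(X | 'JG))%G.
have sGN : (G \subset 'N(X | 'JG))%g := acts_Syl 5 (subxx G).
have nKG : (K <| G)%g.
  rewrite /normal subsetIl /=.
  apply: normsI; first exact: normG.
  exact: subset_trans sGN (normal_norm (astab_normal _ _)).
have Knorm : forall Q : {group gT}, Q \in X -> (K \subset 'N(Q))%g.
  move=> Q QX; apply/subsetP => x /setIP [_ /astabP h].
  by apply/normP; have := h Q QX; move/(congr1 val).
have subK : forall A : {group gT}, (A \subset G)%g ->
    (forall Q : {group gT}, Q \in X -> (A \subset 'N(Q))%g) -> (A \subset K)%g.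
  move=> A sAG hA; apply/subsetP => a aA; apply/setIP; split; first exact: (subsetP sAG).
  apply/astabP => Q QX; apply/val_inj => /=; apply/normP.
  exact: (subsetP (hA Q QX)).
have [P sylP] := Sylow_exists 5 G.
have PX : P \in X by rewrite inE.
have sKG := normal_sub nKG.
have i0 : (0 < #|G : K|%g)%N by rewrite indexg_gt0.
have d30 : (#|G : K|%g %| 30)%N.
  apply: div30 => //.
    move=> s ps s5 sd.
    have sG : (s <= #|G|)%N.
      apply: dvdn_leq => //; apply: dvdn_trans sd (dvdn_indexg _ _).
    have [R [S [RX SX lt4]]] := hyp s ps s5 sG.
    have sylS : (s.-Sylow(G) S)%g by move: SX; rewrite inE.
    set A := ('C_S(R))%G.
    have sA : (s.-group A)%g := pgroupS (subsetIl _ _) (pHall_pgroup sylS).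
    have sAG : (A \subset G)%g := subset_trans (subsetIl _ _) (pHall_sub sylS).
    have sAK : (A \subset K)%g.
      apply: subK => //; apply: (fix_all ps s5 sA sAG (subsetIr _ _) RX X6).
    exact: idx_part sKG sAK sA sylS lt4.
  have [R0 [sR0P le5 hR0]] := sub_index5 PX X6.
  have sR0K : (R0 \subset K)%g.
    by apply: subK => //; apply: subset_trans sR0P (pHall_sub sylP).
  have pR0 : (5.-group R0)%g := pgroupS sR0P (pHall_pgroup sylP).
  exact: idx_part_le sKG sR0K pR0 sylP le5.
have nKGn := normal_norm nKG.
have sPG := pHall_sub sylP.
have nKP : (P \subset 'N(K))%g := subset_trans sPG nKGn.
have sylPK : (5.-Sylow(G / K) (P / K))%g := quotient_pHall nKP sylP.
have cGK : #|(G / K)%g| = #|G : K|%g := card_quotient nKGn.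
have nPKG : ((P / K) <| (G / K))%g by apply: normal5 => //; rewrite cGK.
set M := (coset K @*^-1 (P / K))%G.
have nMG : (M <| G)%g.
  have h : (M <| coset K @*^-1 (G / K))%g by rewrite cosetpre_normal.
  by rewrite quotientGK in h.
have eM : (M :=: K * P)%g by rewrite /= quotientK.
have sPM : (P \subset M)%g by rewrite eM mulG_subr.
have sylPM : (5.-Sylow(M) P)%g := pHall_subl sPM (normal_sub nMG) sylP.
have fr := Frattini_arg nMG sylPM.
have sMN : (M \subset 'N_G(P))%g.
  rewrite subsetI (normal_sub nMG) eM mul_subG ?normG //.
  exact: Knorm.
have sGN' : (G \subset 'N_G(P))%g.
  by rewrite -{1}fr mul_subG.
have := card_Syl sylP; rewrite X6.
by move: sGN'; rewrite -indexg_eq1 => /eqP ->.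
Qed.

Unset Implicit Arguments. Set Strict Implicit.

Theorem proposition3p10 (gT : finGroupType) (G : {group gT}) (p : nat) :
  prime p -> (5 <= p)%N ->
  (2%:R / 5%:R < prstar G p p^' :> rat)%R ->
  (forall P : {group gT}, (P \in 'Syl_p(G))%g -> P \subset solrad G) /\ p_solvable p G.
Proof.
move=> pp p5 H.
have [P sylP] := Sylow_exists p G.
suff nPG : (P <| G)%g by exact: normal_concl sylP nPG.
case: (boolP (p %| #|G|)%N) => pG; last first.
  have P1 : #|P| = 1%N.
    rewrite (card_Hall sylP) p_part.
    have -> : logn p #|G| = 0%N.
      by apply/eqP; rewrite -leqn0 leqNgt logn_gt0 mem_primes pp cardG_gt0 (negbTE pG).
    by [].
  by rewrite (card_le1_trivg (eq_leq P1)) normal1.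
have pleG : (p <= #|G|)%N by apply: dvdn_leq.
have key : forall s, prime s -> s != p -> (s <= #|G|)%N ->
    exists R : {group gT}, exists S : {group gT},
       [/\ (R \in 'Syl_p(G))%g, (S \in 'Syl_s(G))%g & (#|S| < 4 * #|('C_S(R))%g|)%N].
  move=> s ps sp sG.
  have [R [S [RX SX hc]]] := prstar_ext H pp pleG ps sp sG.
  exists R, S; split => //.
  apply: commprob_bound pp p5 _ hc.
  by move: RX; rewrite inE => /pHall_pgroup.
set n := #|('Syl_p(G))%g|.
have hn : forall s, prime s -> s != p -> (n`_s < 4)%N.
  move=> s ps sp.
  case: (leqP s #|G|) => sG; last first.
    rewrite p_part.
    have -> : logn s n = 0%N.
      apply/eqP; rewrite -leqn0 leqNgt logn_gt0 mem_primes ps; apply/negP => /and3P [_ n0 sn].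
      have := dvdn_leq n0 sn; have := dvdn_leq (cardG_gt0 G) (card_Syl_dvd p G).
      rewrite -/n; lia.
    by [].
  have [R [S [RX SX lt4]]] := key s ps sp sG.
  have sylR : (p.-Sylow(G) R)%g by move: RX; rewrite inE.
  have sylS : (s.-Sylow(G) S)%g by move: SX; rewrite inE.
  rewrite /n (card_Syl sylR).
  apply: (@idx_part gT G ('N_G(R))%G ('C_S(R))%G S s (subsetIl _ _) _ _ sylS lt4).
    rewrite subsetI (subset_trans (subsetIl _ _) (pHall_sub sylS)) /=.
    exact: subset_trans (subsetIr _ _) (cent_sub R).
  exact: pgroupS (subsetIl _ _) (pHall_pgroup sylS).
case: (div6 pp p5 (card_Syl_mod G pp) hn) => [n1|[e5 n6]].
  exact: normal_of_nSyl1 sylP n1.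
subst p.
exfalso; apply: (no56 n6) => s ps s5 sG.
exact: key.
Qed.
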